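(* For each $n\ge2$ there exists a constant $\beta_n>0$, depending only on $n$, such that for every lattice $\Lambda\subset\mathbb R^n$ and every special basis $(u_1,\dots,u_n)$ of $\Lambda$, the flat torus $\mathbb R^n/\Lambda$ satisfies $\mathrm{diam}(\mathbb R^n/\Lambda)\ge\beta_n|u_1|$.
   Context: For nonzero $v$ and a nontrivial subspace $W\subset\mathbb R^n$, $\mathrm{ang}(v,W)$ is the minimum angle between $v$ and nonzero vectors of $W$. Let $\theta_n=\arcsin(2^{-n(n-1)/4})$. Say a $\mathbb Z$-basis $v_1,\dots,v_n$ of a lattice $\Lambda$ satisfies the angle condition if $\mathrm{ang}(v_i,\mathrm{span}_{\mathbb R}\{v_j:j\neq i\})\ge\theta_n$ for all $i$ (such bases always exist). Let $R_0(\Lambda)$ be the minimal $r>0$ such that the closed ball of radius $r$ centered at $0$ contains a $\mathbb Z$-basis of $\Lambda$ satisfying the angle condition. A special basis of $\Lambda$ is an ordered $\mathbb Z$-basis $(u_1,\dots,u_n)$ satisfying the angle condition, contained in that closed ball of radius $R_0(\Lambda)$, ordered so that $|u_1|\ge|u_2|\ge\dots\ge|u_n|$, and minimal among all such ordered bases for the lexicographic order of the tuples $(|u_1|,\dots,|u_n|)$. The diameter of $\mathbb R^n/\Lambda$ is with respect to the flat metric induced from Euclidean $\mathbb R^n$. *)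

(* Defs.v *)
From Stdlib Require Import Reals Lra ZArith.
Open Scope R_scope.

(* Vectors of R^n are represented as functions nat -> R; only the
   coordinates k < n are meaningful. Families of vectors (bases) are
   functions nat -> vec, with indices 0..n-1. *)
Definition vec := nat -> R.

Fixpoint fsum (n : nat) (f : nat -> R) : R :=
  match n with
  | O => 0
  | S m => fsum m f + f m
  end.

Definition veq (n : nat) (x y : vec) : Prop := forall k, (k < n)%nat -> x k = y k.
Definition vzero : vec := fun _ => 0.
Definition vsub (x y : vec) : vec := fun k => x k - y k.
Definition dot (n : nat) (x y : vec) : R := fsum n (fun k => x k * y k).
Definition norm (n : nat) (x : vec) : R := sqrt (dot n x x).

Definition lincomb (n : nat) (c : nat -> R) (b : nat -> vec) : vec :=
  fun k => fsum n (fun j => c j * b j k).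

Definition lin_indep (n : nat) (b : nat -> vec) : Prop :=
  forall c : nat -> R, veq n (lincomb n c b) vzero -> forall j, (j < n)%nat -> c j = 0.

Definition in_Zspan (n : nat) (b : nat -> vec) (x : vec) : Prop :=
  exists z : nat -> Z, veq n x (lincomb n (fun j => IZR (z j)) b).

Definition is_lattice (n : nat) (L : vec -> Prop) : Prop :=
  exists b : nat -> vec, lin_indep n b /\ forall x, L x <-> in_Zspan n b x.

Definition is_Zbasis (n : nat) (L : vec -> Prop) (b : nat -> vec) : Prop :=
  (forall z : nat -> Z,
     veq n (lincomb n (fun j => IZR (z j)) b) vzero -> forall j, (j < n)%nat -> z j = 0%Z)
  /\ (forall x, L x <-> in_Zspan n b x).

Definition angle (n : nat) (v w : vec) : R := acos (dot n v w / (norm n v * norm n w)).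

Definition theta (n : nat) : R := asin (Rpower 2 (- (INR n * (INR n - 1)) / 4)).

(* ang(v_i, span{v_j : j <> i}) >= theta_n : since ang is the minimum of the
   angles to nonzero vectors of the subspace, this says every such angle is
   >= theta_n. *)
Definition angle_condition (n : nat) (b : nat -> vec) : Prop :=
  forall i, (i < n)%nat ->
    forall c : nat -> R,
      let w := lincomb n (fun j => if Nat.eqb j i then 0 else c j) b in
      ~ veq n w vzero -> angle n (b i) w >= theta n.

Definition good_basis (n : nat) (L : vec -> Prop) (b : nat -> vec) : Prop :=
  is_Zbasis n L b /\ angle_condition n b.

Definition in_ball (n : nat) (r : R) (b : nat -> vec) : Prop :=
  forall i, (i < n)%nat -> norm n (b i) <= r.

Definition is_R0 (n : nat) (L : vec -> Prop) (r : R) : Prop :=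
  r > 0 /\ (exists b, good_basis n L b /\ in_ball n r b) /\
  (forall r', r' > 0 -> (exists b, good_basis n L b /\ in_ball n r' b) -> r <= r').

Definition sorted_desc (n : nat) (b : nat -> vec) : Prop :=
  forall i, (S i < n)%nat -> norm n (b i) >= norm n (b (S i)).

Definition lex_le (n : nat) (a c : nat -> R) : Prop :=
  (forall i, (i < n)%nat -> a i = c i) \/
  (exists k, (k < n)%nat /\ (forall i, (i < k)%nat -> a i = c i) /\ a k < c k).

Definition candidate (n : nat) (L : vec -> Prop) (r : R) (b : nat -> vec) : Prop :=
  good_basis n L b /\ in_ball n r b /\ sorted_desc n b.

(* special basis (u_1,...,u_n) = (u 0, ..., u (n-1)) *)
Definition special_basis (n : nat) (L : vec -> Prop) (u : nat -> vec) : Prop :=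
  exists r, is_R0 n L r /\ candidate n L r u /\
    forall v, candidate n L r v ->
      lex_le n (fun i => norm n (u i)) (fun i => norm n (v i)).

Definition is_inf (E : R -> Prop) (m : R) : Prop :=
  (forall t, E t -> m <= t) /\ (forall m', (forall t, E t -> m' <= t) -> m' <= m).

Definition is_sup (E : R -> Prop) (m : R) : Prop :=
  (forall t, E t -> t <= m) /\ (forall m', (forall t, E t -> t <= m') -> m <= m').

Definition torus_dist (n : nat) (L : vec -> Prop) (x y : vec) (d : R) : Prop :=
  is_inf (fun t => exists l, L l /\ t = norm n (vsub (vsub x y) l)) d.

Definition torus_diam (n : nat) (L : vec -> Prop) (D : R) : Prop :=
  is_sup (fun d => exists x y, torus_dist n L x y d) D.

(* Main.v *)
Require Import Defs.
From Stdlib Require Import Reals Lra Lia ZArith Classical.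
Set Warnings "-notation-overridden,-ambiguous-paths".
From mathcomp Require ssreflect ssrfun ssrbool eqtype ssrnat seq fintype bigop ssralg matrix mxalgebra Rstruct.
Open Scope R_scope.

Module SpanM.
Import ssreflect ssrfun ssrbool eqtype ssrnat seq fintype bigop ssralg matrix mxalgebra Rstruct.
Import GRing.Theory.
Local Open Scope ring_scope.

Lemma fsum_big n (f : nat -> R) : fsum n f = (\sum_(i < n) f i)%R.
Proof.
elim: n => [|n IH]; first by rewrite big_ord0.
by rewrite big_ord_recr /= IH.
Qed.

Lemma span_Sm m (b : nat -> vec) : lin_indep m.+1 b ->
  forall v : vec, exists c : nat -> R, veq m.+1 v (lincomb m.+1 c b).
Proof.
move=> Hli v.
pose M : 'M[R]_m.+1 := \matrix_(i, j) b i j.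
have Hdet : \det M != 0%R.
  apply/negP => /det0P [w wn0 wM].
  move/negP: wn0; apply; apply/eqP/rowP => i.
  have := Hli (fun j => w ord0 (inord j)) _ i (elimT ltP (ltn_ord i)).
  rewrite inord_val /= => ->; first by rewrite mxE.
  move=> k Hk.
  rewrite /lincomb fsum_big /vzero.
  have := congr1 (fun A : 'rV_m.+1 => A ord0 (Ordinal (introT ltP Hk))) wM.
  rewrite !mxE => E; apply: etrans _ E; apply: eq_bigr => j _ /=.
  by rewrite inord_val mxE.
have Hu : M \in unitmx by rewrite unitmxE unitfE.
pose r : 'rV[R]_m.+1 := \row_k v k.
pose cv := r *m invmx M.
exists (fun j => cv ord0 (inord j)).
move=> k Hk.
rewrite /lincomb fsum_big.
have := congr1 (fun A : 'rV_m.+1 => A ord0 (Ordinal (introT ltP Hk))) (mulmxKV Hu r).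
rewrite !mxE => E; rewrite -E.
apply: eq_bigr => j _.
by rewrite inord_val /M !mxE.
Qed.
End SpanM.

Lemma fsum_ext n f g : (forall k, (k < n)%nat -> f k = g k) -> fsum n f = fsum n g.
Proof.
  induction n as [|n IH]; intros H; simpl. reflexivity.
  rewrite IH by (intros; apply H; lia). rewrite H by lia. reflexivity.
Qed.

Lemma fsum_lin n a b f g : fsum n (fun k => a * f k + b * g k) = a * fsum n f + b * fsum n g.
Proof. induction n as [|n IH]; simpl. ring. rewrite IH. ring. Qed.

Lemma fsum_scal n a f : fsum n (fun k => a * f k) = a * fsum n f.
Proof. induction n as [|n IH]; simpl. ring. rewrite IH. ring. Qed.

Lemma fsum_le n f g : (forall k, (k < n)%nat -> f k <= g k) -> fsum n f <= fsum n g.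
Proof.
  induction n as [|n IH]; intros H; simpl. lra.
  assert (fsum n f <= fsum n g) by (apply IH; intros; apply H; lia).
  assert (f n <= g n) by (apply H; lia). lra.
Qed.

Lemma fsum_sq_ge0 n x : 0 <= fsum n (fun k => x k * x k).
Proof.
  induction n as [|n IH]; simpl. lra. assert (0 <= x n * x n) by nra. lra.
Qed.

Lemma fsum_sq_0 n x : fsum n (fun k => x k * x k) = 0 -> veq n x vzero.
Proof.
  induction n as [|n IH]; simpl; intros H k Hk. lia.
  pose proof (fsum_sq_ge0 n x). assert (0 <= x n * x n) by nra.
  assert (E1 : fsum n (fun k => x k * x k) = 0) by lra.
  assert (E2 : x n * x n = 0) by lra.
  unfold vzero.
  destruct (Nat.eq_dec k n) as [->|Hne]. nra.
  apply IH; [exact E1| lia].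
Qed.

Lemma dot_ge0 n x : 0 <= dot n x x.
Proof. apply fsum_sq_ge0. Qed.

Lemma norm_ge0 n x : 0 <= norm n x.
Proof. apply sqrt_pos. Qed.

Lemma norm_sq n x : norm n x * norm n x = dot n x x.
Proof. apply sqrt_sqrt, dot_ge0. Qed.

Lemma norm_pos n x : ~ veq n x vzero -> 0 < norm n x.
Proof.
  intros H. pose proof (dot_ge0 n x).
  destruct (Req_dec (dot n x x) 0) as [E|E].
  - exfalso. apply H. apply fsum_sq_0. exact E.
  - apply sqrt_lt_R0. lra.
Qed.

Lemma norm_veq n x y : veq n x y -> norm n x = norm n y.
Proof.
  intros H. unfold norm, dot. f_equal. apply fsum_ext. intros k Hk. rewrite H by exact Hk. reflexivity.
Qed.

Lemma norm_scal n t x : norm n (fun k => t * x k) = Rabs t * norm n x.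
Proof.
  unfold norm, dot.
  rewrite (fsum_ext n _ (fun k => (t*t) * (x k * x k))) by (intros; ring).
  rewrite fsum_scal. rewrite sqrt_mult_alt by nra.
  change (t*t) with (Rsqr t). rewrite sqrt_Rsqr_abs. reflexivity.
Qed.

Definition sn (n : nat) : R := Rpower 2 (- (INR n * (INR n - 1)) / 4).

Lemma sn_bounds n : (2 <= n)%nat -> 0 < sn n < 1.
Proof.
  intros Hn. unfold sn, Rpower. split. apply exp_pos.
  assert (H2 : 2 <= INR n) by (apply (le_INR 2); exact Hn).
  pose proof ln_lt_2. assert (0 < ln 2) by (rewrite <- ln_1; apply ln_increasing; lra).
  assert (0 < INR n * (INR n - 1)) by nra.
  assert (0 < INR n * (INR n - 1) / 4) by lra.
  replace (- (INR n * (INR n - 1)) / 4) with (- (INR n * (INR n - 1) / 4)) by field.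
  assert (0 < INR n * (INR n - 1) / 4 * ln 2) by (apply Rmult_lt_0_compat; lra).
  apply (Rlt_le_trans _ (exp 0)); [apply exp_increasing; lra | rewrite exp_0; lra].
Qed.

Lemma theta_facts n : (2 <= n)%nat ->
  0 < theta n <= PI / 2 /\ sin (theta n) = sn n /\
  cos (theta n) = sqrt (1 - sn n * sn n).
Proof.
  intros Hn. pose proof (sn_bounds n Hn) as [H0 H1].
  unfold theta; fold (sn n).
  assert (Hs : sin (asin (sn n)) = sn n) by (apply sin_asin; lra).
  pose proof (asin_bound (sn n)) as [B1 B2].
  split; [split|split].
  - destruct (Rle_dec (asin (sn n)) 0) as [Hle|Hgt]; [|lra].
    exfalso. pose proof PI_RGT_0.
    assert (Hq : 0 <= sin (- asin (sn n))) by (apply sin_ge_0; lra).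
    rewrite sin_neg, Hs in Hq. lra.
  - exact B2.
  - exact Hs.
  - rewrite cos_asin by lra. reflexivity.
Qed.

Lemma acos_ge n r : (2 <= n)%nat -> acos r >= theta n -> r <= cos (theta n).
Proof.
  intros Hn H. pose proof (theta_facts n Hn) as [[T1 T2] [_ Hc]].
  pose proof PI_RGT_0.
  assert (0 <= cos (theta n)) by (rewrite Hc; apply sqrt_pos).
  destruct (Rle_dec r (-1)) as [Hr|Hr]. lra.
  destruct (Rle_dec 1 r) as [Hr'|Hr'].
  - exfalso. unfold acos in H. destruct (Rle_dec r (-1)); [lra|].
    destruct (Rle_dec 1 r); lra.
  - pose proof (acos_bound r) as [A1 A2].
    rewrite <- (cos_acos r) by lra.
    destruct (Req_dec (acos r) (theta n)) as [E|E]. rewrite E; lra.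
    left. apply cos_decreasing_1; lra.
Qed.

Lemma dot_sub n u w :
  dot n (vsub u w) (vsub u w) = dot n u u - 2 * dot n u w + dot n w w.
Proof.
  unfold dot, vsub.
  rewrite (fsum_ext n _ (fun k => 1 * (u k * u k) + 1 * ((-2) * (u k * w k) + w k * w k)))
    by (intros; ring).
  rewrite fsum_lin.
  rewrite (fsum_ext n (fun k => (-2) * (u k * w k) + w k * w k)
             (fun k => (-2) * (u k * w k) + 1 * (w k * w k))) by (intros; ring).
  rewrite fsum_lin. ring.
Qed.

Lemma key_est n (u w : vec) : (2 <= n)%nat ->
  (~ veq n w vzero -> angle n u w >= theta n) ->
  norm n (vsub u w) >= sn n * norm n u.
Proof.
  intros Hn Hang. pose proof (sn_bounds n Hn) as [S0 S1].
  pose proof (norm_ge0 n u) as Nu. pose proof (norm_ge0 n w) as Nw.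
  assert (Hnz : forall x, veq n x vzero -> norm n x = 0).
  { intros x Hx. rewrite (norm_veq n x vzero Hx). unfold norm, dot, vzero.
    rewrite (fsum_ext n _ (fun k => 0 * (0 * 0))) by (intros; ring).
    rewrite fsum_scal, Rmult_0_l. apply sqrt_0. }
  destruct (classic (veq n w vzero)) as [Hw|Hw].
  { rewrite (norm_veq n (vsub u w) u).
    - nra.
    - intros k Hk. unfold vsub. rewrite Hw by exact Hk. unfold vzero. ring. }
  destruct (classic (veq n u vzero)) as [Hu|Hu].
  { rewrite (Hnz u Hu). pose proof (norm_ge0 n (vsub u w)). lra. }
  pose proof (norm_pos n u Hu) as Pu. pose proof (norm_pos n w Hw) as Pw.
  specialize (Hang Hw). unfold angle in Hang.
  apply acos_ge in Hang; [|exact Hn].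
  pose proof (theta_facts n Hn) as [_ [_ Hc]].
  set (c := cos (theta n)) in *.
  assert (Hc0 : 0 <= c) by (rewrite Hc; apply sqrt_pos).
  assert (Hc2 : c * c = 1 - sn n * sn n) by (rewrite Hc; apply sqrt_sqrt; nra).
  assert (Hd : dot n u w <= c * (norm n u * norm n w)).
  { apply (Rmult_le_compat_r (norm n u * norm n w)) in Hang; [|nra].
    unfold Rdiv in Hang. rewrite Rmult_assoc, Rinv_l in Hang by nra. lra. }
  assert (HD : (sn n * norm n u) * (sn n * norm n u) <= dot n (vsub u w) (vsub u w)).
  { rewrite dot_sub, <- (norm_sq n u), <- (norm_sq n w).
    set (a := norm n u) in *. set (b := norm n w) in *. set (s := sn n) in *.
    assert (0 <= (c * a - b) * (c * a - b)) by (pose proof (Rle_0_sqr (c*a-b)) as Q; unfold Rsqr in Q; exact Q).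
    assert (E : c*c*(a*a) = (1 - s*s)*(a*a)) by (rewrite Hc2; ring).
    assert (E2 : (c * a - b) * (c * a - b) = c*c*(a*a) - 2*(c*(a*b)) + b*b) by ring. lra. }
  apply Rle_ge.
  rewrite <- (sqrt_square (sn n * norm n u)) by (apply Rmult_le_pos; lra).
  apply sqrt_le_1_alt. exact HD.
Qed.

Lemma fsum_split0 n f : (1 <= n)%nat ->
  fsum n f = f 0%nat + fsum n (fun j => if Nat.eqb j 0 then 0 else f j).
Proof.
  induction n as [|n IH]; intros Hn. lia.
  destruct n as [|n]. simpl. ring.
  change (fsum (S (S n)) f) with (fsum (S n) f + f (S n)).
  change (fsum (S (S n)) (fun j => if Nat.eqb j 0 then 0 else f j))
    with (fsum (S n) (fun j => if Nat.eqb j 0 then 0 else f j) + (if Nat.eqb (S n) 0 then 0 else f (S n))).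
  rewrite IH by lia. simpl. ring.
Qed.

Lemma lincomb_at n c b k : lincomb n c b k = fsum n (fun j => c j * b j k).
Proof. reflexivity. Qed.

Lemma half_int (z : Z) : Rabs (1/2 - IZR z) >= 1/2.
Proof.
  destruct (Z_le_gt_dec z 0) as [H|H].
  - apply IZR_le in H. rewrite Rabs_right by lra. lra.
  - assert (H' : (1 <= z)%Z) by lia. apply IZR_le in H'.
    rewrite Rabs_left by lra. lra.
Qed.

Lemma lower n L u : (2 <= n)%nat -> good_basis n L u -> forall l, L l ->
  norm n (vsub (vsub (fun k => u 0%nat k / 2) vzero) l) >= sn n / 2 * norm n (u 0%nat).
Proof.
  intros Hn [[_ Hsp] Hang] l Hl.
  apply Hsp in Hl. destruct Hl as [z Hz].
  set (t := 1/2 - IZR (z 0%nat)).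
  assert (Ht := half_int (z 0%nat)). fold t in Ht.
  assert (Ht0 : t <> 0) by (intro E; rewrite E, Rabs_R0 in Ht; lra).
  set (c := fun j => IZR (z j) / t).
  set (w := lincomb n (fun j => if Nat.eqb j 0 then 0 else c j) u).
  assert (Hk : norm n (vsub (u 0%nat) w) >= sn n * norm n (u 0%nat)).
  { apply key_est; [exact Hn|]. intros Hw. exact (Hang 0%nat ltac:(lia) c Hw). }
  rewrite (norm_veq n _ (fun k => t * vsub (u 0%nat) w k)).
  - rewrite norm_scal.
    pose proof (norm_ge0 n (u 0%nat)). pose proof (sn_bounds n Hn).
    assert (0 <= sn n * norm n (u 0%nat)) by (apply Rmult_le_pos; lra).
    nra.
  - intros k Hkn. unfold vsub at 1 2. rewrite Hz by exact Hkn.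
    unfold vsub, w, vzero. rewrite !lincomb_at.
    rewrite (fsum_split0 n (fun j => IZR (z j) * u j k)) by lia.
    rewrite (fsum_ext n (fun j => (if Nat.eqb j 0 then 0 else c j) * u j k)
               (fun j => / t * (if Nat.eqb j 0 then 0 else IZR (z j) * u j k))).
    + rewrite fsum_scal. unfold t in *. field. intro E; apply Ht0; lra.
    + intros j _. destruct (Nat.eqb j 0). ring. unfold c. field. exact Ht0.
Qed.

Lemma abs_fsum_le n g h : (forall j, (j < n)%nat -> Rabs (g j) <= h j) -> Rabs (fsum n g) <= fsum n h.
Proof.
  induction n as [|n IH]; intros H; simpl. rewrite Rabs_R0; lra.
  eapply Rle_trans. apply Rabs_triang.
  assert (Rabs (fsum n g) <= fsum n h) by (apply IH; intros; apply H; lia).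
  assert (Rabs (g n) <= h n) by (apply H; lia). lra.
Qed.

Lemma frac_up r : 0 <= r - IZR (up r - 1) <= 1.
Proof.
  destruct (archimed r) as [A B]. rewrite minus_IZR. simpl. lra.
Qed.

Lemma upper_gen n b L (span : forall v : vec, exists c, veq n v (lincomb n c b)) :
  (forall x, L x <-> in_Zspan n b x) ->
  exists K, forall x y, exists l, L l /\ norm n (vsub (vsub x y) l) <= K.
Proof.
  intros Hsp.
  set (B := fun k => fsum n (fun j => Rabs (b j k))).
  exists (sqrt (fsum n (fun k => B k * B k))).
  intros x y. destruct (span (vsub x y)) as [c Hc].
  set (f := fun j => (up (c j) - 1)%Z).
  exists (lincomb n (fun j => IZR (f j)) b). split.
  { apply Hsp. exists f. intros k _. reflexivity. }
  unfold norm. apply sqrt_le_1_alt. unfold dot. apply fsum_le. intros k Hk.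
  set (e := vsub (vsub x y) (lincomb n (fun j => IZR (f j)) b) k).
  assert (He : e = fsum n (fun j => (c j - IZR (f j)) * b j k)).
  { unfold e. unfold vsub at 1. rewrite Hc by exact Hk. rewrite !lincomb_at.
    rewrite (fsum_ext n (fun j => (c j - IZR (f j)) * b j k)
       (fun j => 1 * (c j * b j k) + (-1) * (IZR (f j) * b j k))) by (intros; ring).
    rewrite fsum_lin. ring. }
  assert (HB : Rabs e <= B k).
  { rewrite He. apply abs_fsum_le. intros j Hj. rewrite Rabs_mult.
    pose proof (frac_up (c j)) as Fr. unfold f.
    rewrite (Rabs_right (c j - _)) by lra.
    pose proof (Rabs_pos (b j k)). nra. }
  pose proof (Rabs_pos e).
  assert (E : e * e = Rabs e * Rabs e) by (rewrite <- Rabs_mult; rewrite Rabs_right; [reflexivity| pose proof (Rle_0_sqr e) as Q; unfold Rsqr in Q; lra]).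
  rewrite E. apply Rmult_le_compat; lra.
Qed.

Lemma inf_exists (E : R -> Prop) : (exists t, E t) -> (forall t, E t -> 0 <= t) -> exists m, is_inf E m.
Proof.
  intros [t0 Ht0] Hlb.
  destruct (completeness (fun t => E (- t))) as [m [Hm1 Hm2]].
  - exists 0. intros t Ht. apply Hlb in Ht. lra.
  - exists (- t0). rewrite Ropp_involutive. exact Ht0.
  - exists (- m). split.
    + intros t Ht. assert (- t <= m) by (apply Hm1; rewrite Ropp_involutive; exact Ht). lra.
    + intros m' Hm'. assert (m <= - m') by (apply Hm2; intros t Ht; apply Hm' in Ht; lra). lra.
Qed.

Lemma sup_exists (E : R -> Prop) K : (exists t, E t) -> (forall t, E t -> t <= K) -> exists m, is_sup E m.
Proof.
  intros [t0 Ht0] Hub.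
  destruct (completeness E) as [m [Hm1 Hm2]].
  - exists K. intros t Ht. apply Hub, Ht.
  - exists t0. exact Ht0.
  - exists m. split.
    + intros t Ht. apply Hm1, Ht.
    + intros m' Hm'. apply Hm2. intros t Ht. apply Hm', Ht.
Qed.


Theorem mainTheorem17 :
  forall n : nat, (2 <= n)%nat ->
  exists beta : R, beta > 0 /\
    forall (L : vec -> Prop), is_lattice n L ->
    forall (u : nat -> vec), special_basis n L u ->
    exists D : R, torus_diam n L D /\ D >= beta * norm n (u 0%nat).
Proof.
  intros n Hn. exists (sn n / 2). split.
  { pose proof (sn_bounds n Hn). lra. }
  intros L [b [Hli Hsp]] u [r [_ [[Hgood _] _]]].
  destruct n as [|m]; [lia|].
  pose proof (SpanM.span_Sm m b Hli) as span.
  destruct (upper_gen (S m) b L span Hsp) as [K HK].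
  assert (hdist : forall x y, exists d, torus_dist (S m) L x y d).
  { intros x y. apply inf_exists.
    - destruct (HK x y) as [l [Hl _]]. eexists. exists l. split; [exact Hl | reflexivity].
    - intros t [l [_ ->]]. apply norm_ge0. }
  destruct (sup_exists (fun d => exists x y, torus_dist (S m) L x y d) K) as [D HD].
  - destruct (hdist vzero vzero) as [d Hd]. exists d, vzero, vzero. exact Hd.
  - intros t [x [y [Ht _]]]. destruct (HK x y) as [l [Hl Hle]].
    eapply Rle_trans; [apply Ht; exists l; split; [exact Hl|reflexivity] | exact Hle].
  - exists D. split; [exact HD|].
    destruct (hdist (fun k => u 0%nat k / 2) vzero) as [d0 Hd0].
    assert (H1 : sn (S m) / 2 * norm (S m) (u 0%nat) <= d0).
    { apply (proj2 Hd0). intros t [l [Hl ->]].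
      apply Rge_le. apply (lower (S m) L u Hn Hgood l Hl). }
    assert (H2 : d0 <= D).
    { apply (proj1 HD). exists (fun k => u 0%nat k / 2), vzero. exact Hd0. }
    lra.
Qed.
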